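(* Let $B=(B,+,0)$ be a unitary magma and $(X,\varphi)$ a $B$-action. Then $$\big(X\rtimes_\varphi B,\ \langle1,0\rangle,\ \pi_X,\ \langle0,1\rangle,\ \pi_B\big)$$ is a retraction point from $X$ to $B$, where $\langle1,0\rangle(x)=(x,0)$, $\pi_X(x,b)=x$, $\langle0,1\rangle(b)=(0,b)$ and $\pi_B(x,b)=b$.
   Context: A unitary magma is a set with a binary operation $+$ and an element $0$ with $b+0=b=0+b$ for all $b$; morphisms preserve $+$ and $0$. A $B$-action is a pair $(X,\varphi)$ with $X$ a set and $\varphi\colon X\times B\times X\times B\to X$ a map such that: (1) there is an element $0\in X$ with $\varphi(x,0,0,0)=x=\varphi(0,0,x,0)$ for all $x\in X$; (2) $\varphi(x,b,0,0)=\varphi(x,0,0,b)=\varphi(0,0,x,b)$ for all $x\in X,b\in B$; (3) $\varphi(0,b,0,b')=0$ for all $b,b'\in B$; (4) writing $\varphi_{00}(x,b)=\varphi(x,0,0,b)$, for all $x,x'\in X$, $b,b'\in B$: $\varphi(x,b,x',b')=\varphi_{00}\big(\varphi(\varphi_{00}(x,b),b,\varphi_{00}(x',b'),b'),\,b+b'\big)$. The semidirect product $X\rtimes_\varphi B$ is the set $\{(x,b)\in X\times B\mid\varphi(x,0,0,b)=x\}$ with operation $(x,b)+(x',b')=(\varphi(x,b,x',b'),b+b')$ and neutral element $(0,0)$ (it is a unitary magma). Given a set $X$ and a unitary magma $B$, a retraction point from $X$ to $B$ is a tuple $(A,k,q,s,p)$ where $A=(A,+,0)$ is a unitary magma, $k\colon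 X\to A$ and $q\colon A\to X$ are maps, $s\colon B\to A$ and $p\colon A\to B$ are morphisms of unitary magmas, and $p(s(b))=b$, $q(k(x))=x$, $p(k(x))=0$, $q(s(b))=q(0)$, and $k(q(a))+s(p(a))=a$ for all $x\in X$, $b\in B$, $a\in A$. *)

(* Defs.v *)
Definition is_unitary_magma {B : Type} (addB : B -> B -> B) (zB : B) : Prop :=
  forall b, addB b zB = b /\ addB zB b = b.

Definition is_unitary_submagma {T : Type} (S : T -> Prop)
    (add : T -> T -> T) (z : T) : Prop :=
  S z /\ (forall a a', S a -> S a' -> S (add a a')) /\
  (forall a, S a -> add a z = a /\ add z a = a).

(* B-action (X, phi) with distinguished element x0 (the element 0 of (1),
   which is unique by (1)). *)
Definition is_B_action {B X : Type} (addB : B -> B -> B) (zB : B)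
    (phi : X -> B -> X -> B -> X) (x0 : X) : Prop :=
  let phi00 := fun x b => phi x zB x0 b in
  (forall x, phi x zB x0 zB = x /\ phi x0 zB x zB = x) /\
  (forall x b, phi x b x0 zB = phi x zB x0 b /\ phi x zB x0 b = phi x0 zB x b) /\
  (forall b b', phi x0 b x0 b' = x0) /\
  (forall x x' b b',
      phi x b x' b' = phi00 (phi (phi00 x b) b (phi00 x' b') b') (addB b b')).

(* Semidirect product X ⋊_phi B, as the subset of X * B ... *)
Definition sdp_carrier {B X : Type} (zB : B) (phi : X -> B -> X -> B -> X)
    (x0 : X) (a : X * B) : Prop :=
  phi (fst a) zB x0 (snd a) = fst a.

Definition sdp_add {B X : Type} (addB : B -> B -> B)
    (phi : X -> B -> X -> B -> X) (a a' : X * B) : X * B :=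
  (phi (fst a) (snd a) (fst a') (snd a'), addB (snd a) (snd a')).

Definition sdp_zero {B X : Type} (zB : B) (x0 : X) : X * B := (x0, zB).

(* Retraction point from X to B, where A is a unitary magma given as a subset
   SA of a carrier type A with operation addA and zero zA. *)
Definition is_retraction_point {X B A : Type}
    (addB : B -> B -> B) (zB : B)
    (SA : A -> Prop) (addA : A -> A -> A) (zA : A)
    (k : X -> A) (q : A -> X) (s : B -> A) (p : A -> B) : Prop :=
  is_unitary_submagma SA addA zA /\
  (forall x, SA (k x)) /\
  (forall b, SA (s b)) /\
  (forall b b', s (addB b b') = addA (s b) (s b')) /\ s zB = zA /\
  (forall a a', SA a -> SA a' -> p (addA a a') = addB (p a) (p a')) /\
  p zA = zB /\
  (forall b, p (s b) = b) /\
  (forall x, q (k x) = x) /\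
  (forall x, p (k x) = zB) /\
  (forall b, q (s b) = q zA) /\
  (forall a, SA a -> addA (k (q a)) (s (p a)) = a).

(* Main.v *)
Require Import Defs.

Theorem proposition5p2 (B X : Type) (addB : B -> B -> B) (zB : B)
    (phi : X -> B -> X -> B -> X) (x0 : X)
    (HB : is_unitary_magma addB zB)
    (Hphi : is_B_action addB zB phi x0) :
  is_retraction_point addB zB
    (sdp_carrier zB phi x0) (sdp_add addB phi) (sdp_zero zB x0)
    (fun x : X => (x, zB))            (* <1,0> *)
    (fun a : X * B => fst a)          (* pi_X *)
    (fun b : B => (x0, b))            (* <0,1> *)
    (fun a : X * B => snd a).         (* pi_B *)
Proof.
  destruct Hphi as [H1 [H2 [H3 H4]]].
  unfold is_retraction_point, is_unitary_submagma, sdp_carrier, sdp_add, sdp_zero; simpl.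
  split; [split; [apply H1|split]|].
  - intros [x b] [x' b'] Ha Ha'; simpl in *.
    set (P := phi x b x' b').
    assert (EP : P = phi P zB x0 (addB b b')).
    { unfold P at 1. rewrite H4, Ha, Ha'. reflexivity. }
    symmetry; exact EP.
  - intros [x b] Ha; simpl in *. split.
    + destruct (H2 x b) as [E _]. rewrite E, Ha. destruct (HB b) as [-> _]; reflexivity.
    + destruct (H2 x b) as [_ E]. rewrite <- E, Ha. destruct (HB b) as [_ ->]; reflexivity.
  - split; [intros x; apply H1|].
    split; [intros b; apply H3|].
    split; [intros b b'; rewrite H3; reflexivity|].
    split; [reflexivity|].
    split; [intros; reflexivity|].
    split; [reflexivity|].
    split; [intros; reflexivity|].
    split; [intros; reflexivity|].
    split; [intros; reflexivity|].
    split; [intros; reflexivity|].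
    intros [x b] Ha; simpl in *. destruct (H2 x b) as [_ E]. rewrite Ha. destruct (HB b) as [_ ->]; reflexivity.
Qed.
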